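(* The singular braid monoid $SB_n$ has a presentation with generators $a_{ts},a_{ts}^{-1}$ for $1\le s<t\le n$ and $b_{qp}$ for $1\le p<q\le n$, and relations $$\begin{aligned} &a_{ts}a_{rq}=a_{rq}a_{ts}\ \text{ for } (t-r)(t-q)(s-r)(s-q)>0,\\ &a_{ts}a_{sr}=a_{tr}a_{ts}=a_{sr}a_{tr}\ \text{ for } 1\le r<s<t\le n,\\ &a_{ts}a_{ts}^{-1}=a_{ts}^{-1}a_{ts}=1\ \text{ for } 1\le s<t\le n,\\ &a_{ts}b_{rq}=b_{rq}a_{ts}\ \text{ for } (t-r)(t-q)(s-r)(s-q)>0,\\ &a_{ts}b_{ts}=b_{ts}a_{ts}\ \text{ for } 1\le s<t\le n,\\ &a_{ts}b_{sr}=b_{tr}a_{ts},\quad a_{sr}b_{tr}=b_{ts}a_{sr},\quad a_{tr}b_{ts}=b_{sr}a_{tr}\ \text{ for } 1\le r<s<t\le n,\\ &b_{ts}b_{rq}=b_{rq}b_{ts}\ \text{ for } (t-r)(t-q)(s-r)(s-q)>0, \end{aligned}$$ where the generators correspond to the following elements of $SB_n$: $a_{ts}=(\sigma_{t-1}\cdots\sigma_{s+1})\sigma_s(\sigma_{s+1}^{-1}\cdots\sigma_{t-1}^{-1})$, $a_{ts}^{-1}=(\sigma_{t-1}\cdots\sigma_{s+1})\sigma_s^{-1}(\sigma_{s+1}^{-1}\cdots\sigma_{t-1}^{-1})$, $b_{qp}=(\sigma_{q-1}\cdots\sigma_{p+1})x_p(\sigma_{p+1}^{-1}\cdots\sigma_{q-1}^{-1})$.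 That is, the assignment of these elements to the generators induces an isomorphism from the monoid so presented onto $SB_n$.
   Context: Fix $n\ge 2$. $SB_n$ is the monoid with generators $\sigma_i,\sigma_i^{-1},x_i$ ($i=1,\dots,n-1$) and relations: $\sigma_i\sigma_j=\sigma_j\sigma_i$ and $x_ix_j=x_jx_i$ if $|i-j|>1$; $x_i\sigma_j=\sigma_jx_i$ if $|i-j|\ne1$; $\sigma_i\sigma_{i+1}\sigma_i=\sigma_{i+1}\sigma_i\sigma_{i+1}$; $\sigma_i\sigma_{i+1}x_i=x_{i+1}\sigma_i\sigma_{i+1}$; $\sigma_{i+1}\sigma_ix_{i+1}=x_i\sigma_{i+1}\sigma_i$; $\sigma_i\sigma_i^{-1}=\sigma_i^{-1}\sigma_i=1$. *)

(* Defs.v *)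
From mathcomp Require Import all_boot all_order all_algebra.
Set Implicit Arguments. Unset Strict Implicit. Unset Printing Implicit Defensive.
Import GRing.Theory Num.Theory.

(* Monoid presentations: the free monoid on a letter type L is [seq L]
   (concatenation, unit [::]); the monoid presented by relations R is the
   quotient of the free monoid by the congruence generated by R. *)
Inductive cong (L : Type) (R : seq L -> seq L -> Prop) : seq L -> seq L -> Prop :=
| cong_step (u v l r : seq L) : R l r -> cong R (u ++ l ++ v) (u ++ r ++ v)
| cong_refl (w : seq L) : cong R w w
| cong_sym (w1 w2 : seq L) : cong R w1 w2 -> cong R w2 w1
| cong_trans (w1 w2 w3 : seq L) : cong R w1 w2 -> cong R w2 w3 -> cong R w1 w3.

(* Sg i = sigma_i, Sgi i = sigma_i^{-1}, X i = x_i, for 1 <= i <= n-1. *)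
Inductive sbletter := Sg of nat | Sgi of nat | X of nat.

Definition sb_idx (n i : nat) : bool := (1 <= i) && (i <= n.-1).

Definition sb_valid_letter (n : nat) (c : sbletter) : bool :=
  match c with Sg i | Sgi i | X i => sb_idx n i end.

Definition sb_valid (n : nat) (w : seq sbletter) : bool := all (sb_valid_letter n) w.

Inductive sb_rel (n : nat) : seq sbletter -> seq sbletter -> Prop :=
| sbr_ss i j : sb_idx n i -> sb_idx n j -> (i.+1 < j) || (j.+1 < i) ->
    sb_rel n [:: Sg i; Sg j] [:: Sg j; Sg i]
| sbr_xx i j : sb_idx n i -> sb_idx n j -> (i.+1 < j) || (j.+1 < i) ->
    sb_rel n [:: X i; X j] [:: X j; X i]
| sbr_xs i j : sb_idx n i -> sb_idx n j -> (i.+1 != j) && (j.+1 != i) ->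
    sb_rel n [:: X i; Sg j] [:: Sg j; X i]
| sbr_braid i : sb_idx n i -> sb_idx n i.+1 ->
    sb_rel n [:: Sg i; Sg i.+1; Sg i] [:: Sg i.+1; Sg i; Sg i.+1]
| sbr_sx1 i : sb_idx n i -> sb_idx n i.+1 ->
    sb_rel n [:: Sg i; Sg i.+1; X i] [:: X i.+1; Sg i; Sg i.+1]
| sbr_sx2 i : sb_idx n i -> sb_idx n i.+1 ->
    sb_rel n [:: Sg i.+1; Sg i; X i.+1] [:: X i; Sg i.+1; Sg i]
| sbr_inv1 i : sb_idx n i -> sb_rel n [:: Sg i; Sgi i] [::]
| sbr_inv2 i : sb_idx n i -> sb_rel n [:: Sgi i; Sg i] [::].

Definition SBeq (n : nat) := cong (sb_rel n).

(* A t s = a_{ts}, Ai t s = a_{ts}^{-1} (1 <= s < t <= n), B q p = b_{qp} (1 <= p < q <= n). *)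
Inductive abletter := A of nat & nat | Ai of nat & nat | B of nat & nat.

Definition pair_ok (n t s : nat) : bool := (1 <= s) && (s < t) && (t <= n).

Definition ab_valid_letter (n : nat) (c : abletter) : bool :=
  match c with A t s | Ai t s | B t s => pair_ok n t s end.

Definition ab_valid (n : nat) (w : seq abletter) : bool := all (ab_valid_letter n) w.

Definition sep (t s r q : nat) : bool :=
  (0 < (t%:Z - r%:Z) * (t%:Z - q%:Z) * (s%:Z - r%:Z) * (s%:Z - q%:Z))%R.

Inductive ab_rel (n : nat) : seq abletter -> seq abletter -> Prop :=
| abr_aa t s r q : pair_ok n t s -> pair_ok n r q -> sep t s r q ->
    ab_rel n [:: A t s; A r q] [:: A r q; A t s]
| abr_aaa1 r s t : 1 <= r -> r < s -> s < t -> t <= n ->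
    ab_rel n [:: A t s; A s r] [:: A t r; A t s]
| abr_aaa2 r s t : 1 <= r -> r < s -> s < t -> t <= n ->
    ab_rel n [:: A t r; A t s] [:: A s r; A t r]
| abr_inv1 t s : pair_ok n t s -> ab_rel n [:: A t s; Ai t s] [::]
| abr_inv2 t s : pair_ok n t s -> ab_rel n [:: Ai t s; A t s] [::]
| abr_ab t s r q : pair_ok n t s -> pair_ok n r q -> sep t s r q ->
    ab_rel n [:: A t s; B r q] [:: B r q; A t s]
| abr_ab_same t s : pair_ok n t s -> ab_rel n [:: A t s; B t s] [:: B t s; A t s]
| abr_ab1 r s t : 1 <= r -> r < s -> s < t -> t <= n ->
    ab_rel n [:: A t s; B s r] [:: B t r; A t s]
| abr_ab2 r s t : 1 <= r -> r < s -> s < t -> t <= n ->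
    ab_rel n [:: A s r; B t r] [:: B t s; A s r]
| abr_ab3 r s t : 1 <= r -> r < s -> s < t -> t <= n ->
    ab_rel n [:: A t r; B t s] [:: B s r; A t r]
| abr_bb t s r q : pair_ok n t s -> pair_ok n r q -> sep t s r q ->
    ab_rel n [:: B t s; B r q] [:: B r q; B t s].

Definition ABeq (n : nat) := cong (ab_rel n).

(* sigma_{t-1} ... sigma_{s+1} *)
Definition conj_left (t s : nat) : seq sbletter := map Sg (rev (iota s.+1 (t - s.+1))).
(* sigma_{s+1}^{-1} ... sigma_{t-1}^{-1} *)
Definition conj_right (t s : nat) : seq sbletter := map Sgi (iota s.+1 (t - s.+1)).

Definition img (c : abletter) : seq sbletter :=
  match c with
  | A t s => conj_left t s ++ Sg s :: conj_right t s
  | Ai t s => conj_left t s ++ Sgi s :: conj_right t s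
  | B q p => conj_left q p ++ X p :: conj_right q p
  end.

Definition phi (w : seq abletter) : seq sbletter := flatten (map img w).

(* Main.v *)
Require Import Defs.
From mathcomp Require Import all_boot all_order all_algebra zify.
From Stdlib Require Import Setoid Morphisms.
Set Implicit Arguments. Unset Strict Implicit. Unset Printing Implicit Defensive.

Section Cong.
Variables (L : Type) (R : seq L -> seq L -> Prop).
Lemma cong_ctx u v a b : cong R a b -> cong R (u ++ a ++ v) (u ++ b ++ v).
Proof.
elim=> {a b} [u0 v0 l r H| w | w1 w2 _ IH | w1 w2 w3 _ IH1 _ IH2].
- have := cong_step (u ++ u0) (v0 ++ v) H. by rewrite -!catA.
- exact: cong_refl.
- exact: cong_sym.
- exact: cong_trans IH1 IH2.
Qed.
Global Instance cong_equiv : Equivalence (cong R).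
Proof. split; [exact: cong_refl | exact: cong_sym | exact: cong_trans]. Qed.
Global Instance cat_proper : Proper (cong R ==> cong R ==> cong R) (@cat L).
Proof.
move=> a b H c d H'. apply: (cong_trans (w2 := b ++ c)).
- have := cong_ctx [::] c H. by rewrite /= .
- have := cong_ctx b [::] H'. by rewrite !cats0.
Qed.
Global Instance cons_proper x : Proper (cong R ==> cong R) (cons x).
Proof. move=> a b H. have := cong_ctx [:: x] [::] H. by rewrite !cats0. Qed.
Lemma rel_t l r t : R l r -> cong R (l ++ t) (r ++ t).
Proof. move=> H; have := cong_ctx [::] t (cong_step [::] [::] H). by rewrite /= !cats0. Qed.
End Cong.
#[export] Hint Resolve cong_refl : core.

Definition far (i j : nat) := (i.+1 < j) || (j.+1 < i).
Section SepS.
Import Order.TTheory GRing.Theory Num.Theory.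
Local Open Scope ring_scope.
Lemma Ppos (x q r : nat) : (x < q)%N \/ (r < x)%N -> (q < r)%N -> 0 < (x%:Z - r%:Z) * (x%:Z - q%:Z).
Proof. move=> H1 H2. nia. Qed.
Lemma Pneg (x q r : nat) : (q < x)%N -> (x < r)%N -> (x%:Z - r%:Z) * (x%:Z - q%:Z) < 0.
Proof. move=> H1 H2. nia. Qed.
Lemma Pz (x q r : nat) : x = q \/ x = r -> (x%:Z - r%:Z) * (x%:Z - q%:Z) = 0.
Proof. case=> ->; rewrite subrr ?mulr0 ?mul0r //. Qed.
Lemma sep_cases t s r q : (s < t)%N -> (q < r)%N -> sep t s r q ->
  [\/ (r < s)%N, (t < q)%N, (s < q)%N /\ (r < t)%N | (q < s)%N /\ (t < r)%N].
Proof.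
rewrite /sep -mulrA => st qr H.
suff: ((r < s)%N \/ (t < q)%N) \/ ((s < q)%N /\ (r < t)%N \/ (q < s)%N /\ (t < r)%N).
  by case=> [[]|[]]; [constructor 1|constructor 2|constructor 3|constructor 4].
move: H.
have cl : forall x : nat, ((x < q)%N \/ (r < x)%N) \/ ((q < x)%N /\ (x < r)%N) \/ (x = q \/ x = r) by move=> x; lia.
case: (cl t) => [Ht|[[Ht1 Ht2]|Ht]]; case: (cl s) => [Hs|[[Hs1 Hs2]|Hs]].
all: try (rewrite (@Pz _ _ _ Hs) mulr0 ltxx //).
all: try (rewrite (@Pz _ _ _ Ht) mul0r ltxx //).
- move=> _. lia.
- move: (@Ppos _ _ _ Ht qr) (@Pneg _ _ _ Hs1 Hs2). nia.
- move: (@Ppos _ _ _ Hs qr) (@Pneg _ _ _ Ht1 Ht2). nia.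
- move=> _; lia.
Qed.
Lemma far_sep i j : far i j -> sep i.+1 i j.+1 j.
Proof. rewrite /far /sep -mulrA => H.
have h1 : (i.+1 < j)%N \/ (j.+1 < i.+1)%N by lia.
have h2 : (i < j)%N \/ (j.+1 < i)%N by lia.
move: (@Ppos _ _ _ h1 (ltnSn j)) (@Ppos _ _ _ h2 (ltnSn j)). nia. Qed.

End SepS.

Definition lidx (a : sbletter) := match a with Sg i | Sgi i | X i => i end.
Definition yty (y : nat -> sbletter) := y = Sg \/ y = X.
Definition cw (y : nat -> sbletter) t s := conj_left t s ++ y s :: conj_right t s.
Arguments cw : simpl never.

Lemma cw_base y s : cw y s.+1 s = [:: y s].
Proof. by rewrite /cw /conj_left /conj_right subnn. Qed.
Lemma cw_step y t s u : s < t -> cw y t.+1 s ++ u = Sg t :: cw y t s ++ Sgi t :: u.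
Proof.
move=> st. rewrite /cw /conj_left /conj_right.
have -> : t.+1 - s.+1 = (t - s.+1) + 1 by lia.
rewrite iotaD /= rev_cat /=.
have -> : s.+1 + (t - s.+1) = t by lia.
by rewrite /= map_cat /= -!catA /= -!catA.
Qed.

Section SB.
Variable n : nat.
Local Notation "u ≈ v" := (SBeq n u v) (at level 70).
Definition lvalid a := sb_idx n (lidx a).
Definition commw (u v : seq sbletter) := forall t, u ++ v ++ t ≈ v ++ u ++ t.

Ltac idx := rewrite ?/lvalid /sb_idx /=; lia.

Lemma cancel1 i : sb_idx n i -> forall t, Sg i :: Sgi i :: t ≈ t.
Proof. move=> H t. exact: (rel_t t (sbr_inv1 H)). Qed.
Lemma cancel2 i : sb_idx n i -> forall t, Sgi i :: Sg i :: t ≈ t.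
Proof. move=> H t. exact: (rel_t t (sbr_inv2 H)). Qed.

Lemma commw_sym u v : commw u v -> commw v u.
Proof. move=> H t. by symmetry. Qed.
Lemma commw_cat u1 u2 v : commw u1 v -> commw u2 v -> commw (u1 ++ u2) v.
Proof. move=> H1 H2 t. by rewrite -!catA H2 H1. Qed.
Lemma commw_nil v : commw [::] v.
Proof. by move=> t. Qed.
Lemma commw_inv i v : sb_idx n i -> commw [:: Sg i] v -> commw [:: Sgi i] v.
Proof.
move=> Hi H t /=.
transitivity (Sgi i :: v ++ Sg i :: Sgi i :: t); first by rewrite (cancel1 Hi).
have /= E := H (Sgi i :: t). by rewrite -E (cancel2 Hi).
Qed.
Lemma commw_all (P : pred sbletter) u c :
  all P u -> (forall a, P a -> commw [:: a] c) -> commw u c.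
Proof.
move=> + H; elim: u => [|a u IH] /=; first by move=> _; exact: commw_nil.
case/andP=> Pa Pu. exact: (commw_cat (u1 := [:: a]) (H a Pa) (IH Pu)).
Qed.

Lemma comm_base a b : lvalid a -> lvalid b -> far (lidx a) (lidx b) ->
  (a = Sg (lidx a) \/ a = X (lidx a)) -> (b = Sg (lidx b) \/ b = X (lidx b)) ->
  commw [:: a] [:: b].
Proof.
move=> Ha Hb F [->|->] [->|->] t /=.
- exact: (rel_t t (sbr_ss Ha Hb F)).
- symmetry. apply: (rel_t t (sbr_xs Hb Ha _)). rewrite /far in F. lia.
- apply: (rel_t t (sbr_xs Ha Hb _)). rewrite /far in F. lia.
- exact: (rel_t t (sbr_xx Ha Hb F)).
Qed.

Lemma comm_far : forall a b, lvalid a -> lvalid b -> far (lidx a) (lidx b) -> commw [:: a] [:: b].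
Proof.
have L1 : forall a b, lvalid a -> lvalid b -> far (lidx a) (lidx b) ->
    (b = Sg (lidx b) \/ b = X (lidx b)) -> commw [:: a] [:: b].
  move=> [i|i|i] b Ha Hb F Hbt.
  - by apply: comm_base => //; left.
  - apply: commw_inv => //. apply: comm_base => //; left => //.
  - by apply: comm_base => //; right.
move=> a [j|j|j] Ha Hb F.
- by apply: L1 => //; left.
- apply: commw_sym; apply: commw_inv => //; apply: commw_sym.
  apply: L1 => //; try (by left); rewrite /far /= in F *; lia.
- by apply: L1 => //; right.
Qed.

Lemma comm_same y i : yty y -> sb_idx n i -> commw [:: y i] [:: Sg i].
Proof.
move=> [->|->] Hi t /=; first by [].
apply: (rel_t t (sbr_xs Hi Hi _)). lia.
Qed.

Lemma relS y i : yty y -> sb_idx n i -> sb_idx n i.+1 ->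
  forall t, Sg i :: Sg i.+1 :: y i :: t ≈ y i.+1 :: Sg i :: Sg i.+1 :: t.
Proof.
move=> [->|->] H1 H2 t.
- exact: (rel_t t (sbr_braid H1 H2)).
- exact: (rel_t t (sbr_sx1 H1 H2)).
Qed.
Lemma relT y i : yty y -> sb_idx n i -> sb_idx n i.+1 ->
  forall t, Sg i.+1 :: Sg i :: y i.+1 :: t ≈ y i :: Sg i.+1 :: Sg i :: t.
Proof.
move=> [->|->] H1 H2 t.
- symmetry. exact: (rel_t t (sbr_braid H1 H2)).
- exact: (rel_t t (sbr_sx2 H1 H2)).
Qed.
Lemma relT' y i : yty y -> sb_idx n i -> sb_idx n i.+1 ->
  forall t, y i.+1 :: Sgi i :: Sgi i.+1 :: t ≈ Sgi i :: Sgi i.+1 :: y i :: t.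
Proof.
move=> Hy H1 H2 t.
transitivity (Sgi i :: Sgi i.+1 :: Sg i.+1 :: Sg i :: y i.+1 :: Sgi i :: Sgi i.+1 :: t).
  by rewrite (cancel2 H2) (cancel2 H1).
by rewrite relT // (cancel1 H1) (cancel1 H2).
Qed.

Lemma cf a b : lvalid a -> lvalid b -> far (lidx a) (lidx b) -> forall t, a :: b :: t ≈ b :: a :: t.
Proof. move=> Ha Hb F t. exact: (comm_far Ha Hb F t). Qed.

Ltac cws := repeat (rewrite ?cw_base; rewrite cw_step; last lia); rewrite ?cw_base.

Lemma cw_letters y t s : yty y -> s < t -> all (fun a => (s <= lidx a) && (lidx a < t)) (cw y t s).
Proof.
move=> Hy st; rewrite /cw /conj_left /conj_right all_cat /= all_map all_rev all_map.
have -> : (s <= lidx (y s)) && (lidx (y s) < t) by case: Hy => ->; rewrite /= leqnn.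
by rewrite /=; apply/andP; split; apply/allP => k; rewrite mem_iota => H /=; lia.
Qed.

Lemma comm_block_far a y t s : yty y -> 1 <= s -> s < t -> t <= n -> lvalid a ->
  ((lidx a).+1 < s) || (t < lidx a) -> commw [:: a] (cw y t s).
Proof.
move=> Hy s1 + + Ha. elim: t => [//|t IH] st tn F.
have [lt|E0] : s < t \/ s = t by lia.
- move=> u /=. cws.
  rewrite (@cf a (Sg t)) //; last (by rewrite /far /=; lia); last by idx.
  have /= E := IH lt (ltnW tn) ltac:(lia) (Sgi t :: u). rewrite E.
  rewrite (@cf a (Sgi t)) //; last (by rewrite /far /=; lia); last by idx.
- subst t => u /=. rewrite cw_base /=.
  case: Hy => ->; apply: cf => //; rewrite ?/lvalid /far /=; try idx.
Qed.

Lemma comm_block_inner z k y t s : yty z -> yty y -> 1 <= s -> t <= n -> s < k -> k.+1 < t ->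
  commw [:: z k] (cw y t s).
Proof.
move=> Hz Hy s1 + sk. elim: t => [//|t IH] tn kt u /=.
have lz : forall j, lidx (z j) = j by case: Hz => -> .
have [lt|E0] : k.+1 < t \/ k.+1 = t by lia.
- cws.
  rewrite (@cf (z k) (Sg t)); rewrite ?/lvalid ?lz /far //; try idx.
  have /= E := IH (ltnW tn) lt (Sgi t :: u). rewrite E.
  rewrite (@cf (z k) (Sgi t)); rewrite ?/lvalid ?lz /far //; try idx.
- clear IH. subst t. cws.
  have Hk : sb_idx n k by idx.
  have Hk1 : sb_idx n k.+1 by idx.
  rewrite -(relT Hz Hk Hk1).
  have /= E := @comm_block_far (z k.+1) y k s Hy s1 sk ltac:(lia) ltac:(rewrite /lvalid lz; idx)
     ltac:(rewrite lz; lia) (Sgi k :: Sgi k.+1 :: u).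
  by rewrite E (relT' Hz Hk Hk1).
Qed.

Lemma comm_block a y t s : yty y -> 1 <= s -> s < t -> t <= n -> lvalid a ->
  [|| (lidx a).+1 < s, t < lidx a | (s < lidx a) && ((lidx a).+1 < t)] -> commw [:: a] (cw y t s).
Proof.
move=> Hy s1 st tn Ha.
case/or3P => [F|F|/andP[F1 F2]].
- by apply: comm_block_far => //; rewrite F.
- by apply: comm_block_far => //; rewrite F orbT.
case: a Ha F1 F2 => i /= Ha F1 F2.
- by apply: (@comm_block_inner Sg) => //; left.
- apply: commw_inv => //. by apply: (@comm_block_inner Sg) => //; left.
- by apply: (@comm_block_inner X) => //; right.
Qed.

Lemma G1 y z t s r q : yty y -> yty z -> pair_ok n t s -> pair_ok n r q -> sep t s r q ->
  commw (cw y t s) (cw z r q).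
Proof.
move=> Hy Hz Pts Prq S.
move: Pts Prq; rewrite /pair_ok => /andP[/andP[s1 st] tn] /andP[/andP[q1 qr] rn].
case: (sep_cases st qr S) => [H|H|[H1 H2]|[H1 H2]].
- apply: commw_sym. apply: (commw_all (cw_letters Hz qr)) => a /andP[a1 a2].
  apply: comm_block => //; rewrite ?/lvalid /sb_idx; lia.
- apply: commw_sym. apply: (commw_all (cw_letters Hz qr)) => a /andP[a1 a2].
  apply: comm_block => //; rewrite ?/lvalid /sb_idx; lia.
- apply: commw_sym. apply: (commw_all (cw_letters Hz qr)) => a /andP[a1 a2].
  apply: comm_block => //; rewrite ?/lvalid /sb_idx; lia.
- apply: (commw_all (cw_letters Hy st)) => a /andP[a1 a2].
  apply: comm_block => //; rewrite ?/lvalid /sb_idx; lia.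
Qed.



Lemma lidx_y y j : yty y -> lidx (y j) = j.
Proof. by case=> ->. Qed.

Lemma K2 y t s : yty y -> 1 <= s -> s.+1 < t -> t <= n ->
  forall u, cw y t s ++ u ≈ Sgi s :: cw y t s.+1 ++ Sg s :: u.
Proof.
move=> Hy s1. elim: t => [//|t IH] st tn u.
have [lt|E0] : s.+1 < t \/ s.+1 = t by lia.
- cws.
  have /= E := IH lt (ltnW tn) (Sgi t :: u). rewrite E.
  rewrite (@cf (Sg t) (Sgi s)) /lvalid /far /=; try idx.
  rewrite (@cf (Sg s) (Sgi t)) /lvalid /far /=; try idx.
  done.
- clear IH. subst t. cws.
  have H1 : sb_idx n s by idx.
  have H2 : sb_idx n s.+1 by idx.
  transitivity (Sgi s :: Sg s :: Sg s.+1 :: y s :: Sgi s.+1 :: u); first by rewrite (cancel2 H1).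
  by rewrite (relS Hy H1 H2) (cancel1 H2).
Qed.

Lemma G2a y r s t : yty y -> 1 <= r -> r < s -> s < t -> t <= n ->
  forall u, cw Sg t s ++ cw y s r ++ u ≈ cw y t r ++ cw Sg t s ++ u.
Proof.
move=> Hy r1 rs. elim: t => [//|t IH] st tn u.
have [lt|E0] : s < t \/ s = t by lia.
- cws.
  have /= E := @comm_block_far (Sgi t) y s r Hy r1 rs ltac:(lia) ltac:(idx) ltac:(rewrite /=; lia) u.
  rewrite E.
  have E2 := IH lt (ltnW tn) (Sgi t :: u). rewrite E2.
  by rewrite (cancel2 (i := t)) //; idx.
- clear IH. subst t. rewrite cw_base /=. cws.
  by rewrite (cancel2 (i := s)) //; idx.
Qed.

Lemma G2b0 y r t : yty y -> 1 <= r -> r.+1 < t -> t <= n ->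
  forall u, Sg r :: cw y t r ++ u ≈ cw y t r.+1 ++ Sg r :: u.
Proof.
move=> Hy r1. elim: t => [//|t IH] rt tn u.
have [lt|E0] : r.+1 < t \/ r.+1 = t by lia.
- cws.
  rewrite (@cf (Sg r) (Sg t)) /lvalid /far /=; try idx.
  have /= E := IH lt (ltnW tn) (Sgi t :: u). rewrite E.
  rewrite (@cf (Sg r) (Sgi t)) /lvalid /far /=; try idx.
  done.
- clear IH. subst t. rewrite cw_base. cws. rewrite /=.
  have H1 : sb_idx n r by idx.
  have H2 : sb_idx n r.+1 by idx.
  by rewrite (relS Hy H1 H2) (cancel1 H2).
Qed.

Lemma G2b y r s t : yty y -> 1 <= r -> r < s -> s < t -> t <= n ->
  forall u, cw Sg s r ++ cw y t r ++ u ≈ cw y t s ++ cw Sg s r ++ u.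
Proof.
move=> Hy r1 rs st tn.
have [d Hd] : exists d, s = r.+1 + d by exists (s - r.+1); lia.
elim: d r Hd r1 rs => [|d IH] r Hd r1 rs u.
- rewrite addn0 in Hd. subst s. rewrite cw_base /=. exact: G2b0.
- have HSg : yty Sg by left.
  rewrite (@K2 Sg s r HSg r1 ltac:(lia) ltac:(lia)).
  rewrite (@K2 y t r Hy r1 ltac:(lia) ltac:(lia)).
  rewrite (@K2 Sg s r HSg r1 ltac:(lia) ltac:(lia)).
  rewrite (cancel1 (i := r)); last by idx.
  rewrite (IH r.+1) //; try lia.
  have /= E := @comm_block_far (Sgi r) y t s Hy ltac:(lia) st tn ltac:(idx) ltac:(rewrite /=; lia)
    (cw Sg s r.+1 ++ Sg r :: u).
  by rewrite E.
Qed.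

Lemma G2c0 y r t : yty y -> 1 <= r -> r.+1 < t -> t <= n ->
  forall u, cw Sg t r ++ cw y t r.+1 ++ u ≈ y r :: cw Sg t r ++ u.
Proof.
move=> Hy r1. elim: t => [//|t IH] rt tn u.
have ly := lidx_y _ Hy.
have [lt|E0] : r.+1 < t \/ r.+1 = t by lia.
- cws.
  rewrite (cancel2 (i := t)); last by idx.
  have /= E := IH lt (ltnW tn) (Sgi t :: u). rewrite E.
  rewrite -(@cf (y r) (Sg t)) /lvalid ?ly /far /=; try idx.
  done.
- clear IH. subst t. cws. rewrite /=.
  have H1 : sb_idx n r by idx.
  have H2 : sb_idx n r.+1 by idx.
  have C : commw [:: Sgi r.+1] [:: y r.+1].
    apply: commw_inv => //. apply: commw_sym. exact: comm_same.
  have /= C' := C u. rewrite C'.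
  by rewrite (relT Hy H1 H2).
Qed.

Lemma G2c y r s t : yty y -> 1 <= r -> r < s -> s < t -> t <= n ->
  forall u, cw Sg t r ++ cw y t s ++ u ≈ cw y s r ++ cw Sg t r ++ u.
Proof.
move=> Hy r1 rs st tn.
have [d Hd] : exists d, s = r.+1 + d by exists (s - r.+1); lia.
elim: d r Hd r1 rs => [|d IH] r Hd r1 rs u.
- rewrite addn0 in Hd. subst s. rewrite cw_base /=. apply: G2c0 => //; lia.
- have HSg : yty Sg by left.
  rewrite (@K2 Sg t r HSg r1 ltac:(lia) ltac:(lia)).
  have /= E := @comm_block_far (Sg r) y t s Hy ltac:(lia) st tn ltac:(idx) ltac:(rewrite /=; lia) u.
  rewrite E.
  rewrite (IH r.+1) //; try lia.
  rewrite (@K2 y s r Hy r1 ltac:(lia) ltac:(lia)).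
  rewrite (@K2 Sg t r HSg r1 ltac:(lia) ltac:(lia)).
  by rewrite (cancel1 (i := r)) //; idx.
Qed.

Lemma G3 t s : 1 <= s -> s < t -> t <= n ->
  forall u, cw Sg t s ++ cw X t s ++ u ≈ cw X t s ++ cw Sg t s ++ u.
Proof.
move=> s1. elim: t => [//|t IH] st tn u.
have [lt|E0] : s < t \/ s = t by lia.
- cws. rewrite !(cancel2 (i := t)); try idx.
  have /= E := IH lt (ltnW tn) (Sgi t :: u). by rewrite E.
- clear IH. subst t. rewrite !cw_base /=.
  symmetry. apply: (@comm_same X s); [by right | idx].
Qed.

Lemma Ginv1 t s : 1 <= s -> s < t -> t <= n -> forall u, cw Sg t s ++ cw Sgi t s ++ u ≈ u.
Proof.
move=> s1. elim: t => [//|t IH] st tn u.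
have [lt|E0] : s < t \/ s = t by lia.
- cws. rewrite !(cancel2 (i := t)); try idx.
  have /= E := IH lt (ltnW tn) (Sgi t :: u). rewrite E.
  rewrite (cancel1 (i := t)) //; idx.
- clear IH. subst t. rewrite !cw_base /=. rewrite (cancel1 (i := s)) //; idx.
Qed.

Lemma Ginv2 t s : 1 <= s -> s < t -> t <= n -> forall u, cw Sgi t s ++ cw Sg t s ++ u ≈ u.
Proof.
move=> s1. elim: t => [//|t IH] st tn u.
have [lt|E0] : s < t \/ s = t by lia.
- cws. rewrite !(cancel2 (i := t)); try idx.
  have /= E := IH lt (ltnW tn) (Sgi t :: u). rewrite E.
  rewrite (cancel1 (i := t)) //; idx.
- clear IH. subst t. rewrite !cw_base /=. rewrite (cancel2 (i := s)) //; idx.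
Qed.

End SB.

Lemma phi_cat w1 w2 : phi (w1 ++ w2) = phi w1 ++ phi w2.
Proof. by rewrite /phi map_cat flatten_cat. Qed.
Lemma phi2 a b : phi [:: a; b] = img a ++ img b ++ [::].
Proof. by []. Qed.
Lemma imgA t s : img (A t s) = cw Sg t s. Proof. by []. Qed.
Lemma imgAi t s : img (Ai t s) = cw Sgi t s. Proof. by []. Qed.
Lemma imgB t s : img (B t s) = cw X t s. Proof. by []. Qed.

Lemma phi_rel n l r : ab_rel n l r -> SBeq n (phi l) (phi r).
Proof.
have HSg : yty Sg by left.
have HX : yty X by right.
case=> [t s r' q Pts Prq S|r' s t r1 rs st tn|r' s t r1 rs st tn|t s P|t s P
       |t s r' q Pts Prq S|t s P|r' s t r1 rs st tn|r' s t r1 rs st tn|r' s t r1 rs st tn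
       |t s r' q Pts Prq S]; rewrite ?phi2 ?imgA ?imgAi ?imgB.
- exact: (G1 HSg HSg Pts Prq S [::]).
- exact: (G2a HSg r1 rs st tn [::]).
- exact: (G2c HSg r1 rs st tn [::]).
- move: P; rewrite /pair_ok => /andP[/andP[s1 st] tn]. exact: (Ginv1 s1 st tn [::]).
- move: P; rewrite /pair_ok => /andP[/andP[s1 st] tn]. exact: (Ginv2 s1 st tn [::]).
- exact: (G1 HSg HX Pts Prq S [::]).
- move: P; rewrite /pair_ok => /andP[/andP[s1 st] tn]. exact: (G3 s1 st tn [::]).
- exact: (G2a HX r1 rs st tn [::]).
- exact: (G2b HX r1 rs st tn [::]).
- exact: (G2c HX r1 rs st tn [::]).
- exact: (G1 HX HX Pts Prq S [::]).
Qed.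

Lemma phi_cong n w1 w2 : ABeq n w1 w2 -> SBeq n (phi w1) (phi w2).
Proof.
elim=> [u v l r H|w|w1' w2' _ IH|w1' w2' w3 _ IH1 _ IH2].
- rewrite !phi_cat. apply: cat_proper => //. apply: cat_proper => //. exact: phi_rel.
- by [].
- by symmetry.
- by transitivity (phi w2').
Qed.

Definition psi_l (a : sbletter) : abletter :=
  match a with Sg i => A i.+1 i | Sgi i => Ai i.+1 i | X i => B i.+1 i end.
Definition psi (u : seq sbletter) := map psi_l u.

Lemma phi_psi u : phi (psi u) = u.
Proof.
elim: u => [|a u IH] //. rewrite /phi /= in IH *. rewrite IH.
by case: a => i /=; rewrite /conj_left /conj_right subnn.
Qed.

Lemma psi_cw_step y t s u : s < t ->
  psi (cw y t.+1 s) ++ u = A t.+1 t :: psi (cw y t s) ++ Ai t.+1 t :: u.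
Proof.
move=> st. have := cw_step y [::] st. rewrite cats0 => ->.
by rewrite /psi /= map_cat /= -catA.
Qed.

Section AB.
Variable n : nat.
Local Notation "u ≈ v" := (ABeq n u v) (at level 70).
Ltac pok := rewrite /pair_ok /=; lia.

Lemma psi_rel l r : sb_rel n l r -> psi l ≈ psi r.
Proof.
case=> [i j Hi Hj F|i j Hi Hj F|i j Hi Hj F|i Hi Hi1|i Hi Hi1|i Hi Hi1|i Hi|i Hi];
  rewrite /psi /=; rewrite /sb_idx in Hi *; try rewrite /sb_idx in Hj; try rewrite /sb_idx in Hi1.
- have P1 : pair_ok n i.+1 i by pok.
  have P2 : pair_ok n j.+1 j by pok.
  exact: (cong_step [::] [::] (abr_aa P1 P2 (far_sep F))). 
- apply: (cong_step [::] [::] (abr_bb _ _ (far_sep F))); try pok.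
- have [E|F'] : i = j \/ far j i by rewrite /far; lia.
  + subst j. apply: cong_sym. apply: (cong_step [::] [::] (abr_ab_same _)). pok.
  + apply: cong_sym. apply: (cong_step [::] [::] (abr_ab _ _ (far_sep F'))); try pok.
- transitivity [:: A i.+1 i; A i.+2 i; A i.+2 i.+1].
    apply: (cong_step [:: A i.+1 i] [::] (@abr_aaa1 n i i.+1 i.+2 _ _ _ _)); try pok.
  transitivity [:: A i.+2 i; A i.+2 i.+1; A i.+2 i.+1].
    apply: cong_sym. apply: (cong_step [::] [:: A i.+2 i.+1] (@abr_aaa2 n i i.+1 i.+2 _ _ _ _)); try pok.
  apply: cong_sym. apply: (cong_step [::] [:: A i.+2 i.+1] (@abr_aaa1 n i i.+1 i.+2 _ _ _ _)); try pok.
- transitivity [:: A i.+1 i; B i.+2 i; A i.+2 i.+1].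
    apply: (cong_step [:: A i.+1 i] [::] (@abr_ab1 n i i.+1 i.+2 _ _ _ _)); try pok.
  apply: (cong_step [::] [:: A i.+2 i.+1] (@abr_ab2 n i i.+1 i.+2 _ _ _ _)); try pok.
- transitivity [:: A i.+2 i; A i.+2 i.+1; B i.+2 i.+1].
    apply: (cong_step [::] [:: B i.+2 i.+1] (@abr_aaa1 n i i.+1 i.+2 _ _ _ _)); try pok.
  transitivity [:: A i.+2 i; B i.+2 i.+1; A i.+2 i.+1].
    apply: (cong_step [:: A i.+2 i] [::] (abr_ab_same _)). pok.
  transitivity [:: B i.+1 i; A i.+2 i; A i.+2 i.+1].
    apply: (cong_step [::] [:: A i.+2 i.+1] (@abr_ab3 n i i.+1 i.+2 _ _ _ _)); try pok.
  apply: cong_sym. apply: (cong_step [:: B i.+1 i] [::] (@abr_aaa1 n i i.+1 i.+2 _ _ _ _)); try pok.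
- apply: (cong_step [::] [::] (abr_inv1 _)). pok.
- apply: (cong_step [::] [::] (abr_inv2 _)). pok.
Qed.

Lemma psi_base y s : psi (cw y s.+1 s) = [:: psi_l (y s)].
Proof. by rewrite cw_base. Qed.

Lemma pp_A t s : 1 <= s -> s < t -> t <= n -> forall u, psi (cw Sg t s) ++ u ≈ A t s :: u.
Proof.
move=> s1. elim: t => [//|t IH] st tn u.
have [lt|E0] : s < t \/ s = t by lia.
- rewrite psi_cw_step //. rewrite (IH lt (ltnW tn) (Ai t.+1 t :: u)).
  transitivity (A t.+1 s :: A t.+1 t :: Ai t.+1 t :: u).
    apply: (cong_step [::] (Ai t.+1 t :: u) (@abr_aaa1 n s t t.+1 _ _ _ _)); lia.
  apply: (cong_step [:: A t.+1 s] u (abr_inv1 _)); pok.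
- clear IH. subst t. by rewrite psi_base.
Qed.

Lemma pp_Ai t s : 1 <= s -> s < t -> t <= n -> forall u, psi (cw Sgi t s) ++ u ≈ Ai t s :: u.
Proof.
move=> s1. elim: t => [//|t IH] st tn u.
have [lt|E0] : s < t \/ s = t by lia.
- rewrite psi_cw_step //. rewrite (IH lt (ltnW tn) (Ai t.+1 t :: u)).
  transitivity (Ai t.+1 s :: A t.+1 s :: A t.+1 t :: Ai t s :: Ai t.+1 t :: u).
    apply: cong_sym. apply: (cong_step [::] (A t.+1 t :: Ai t s :: Ai t.+1 t :: u) (abr_inv2 _)); pok.
  transitivity (Ai t.+1 s :: A t.+1 t :: A t s :: Ai t s :: Ai t.+1 t :: u).
    apply: cong_sym.
    apply: (cong_step [:: Ai t.+1 s] (Ai t s :: Ai t.+1 t :: u) (@abr_aaa1 n s t t.+1 _ _ _ _)); lia.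
  transitivity (Ai t.+1 s :: A t.+1 t :: Ai t.+1 t :: u).
    apply: (cong_step [:: Ai t.+1 s; A t.+1 t] (Ai t.+1 t :: u) (abr_inv1 _)); pok.
  apply: (cong_step [:: Ai t.+1 s] u (abr_inv1 _)); pok.
- clear IH. subst t. by rewrite psi_base.
Qed.

Lemma pp_B t s : 1 <= s -> s < t -> t <= n -> forall u, psi (cw X t s) ++ u ≈ B t s :: u.
Proof.
move=> s1. elim: t => [//|t IH] st tn u.
have [lt|E0] : s < t \/ s = t by lia.
- rewrite psi_cw_step //. rewrite (IH lt (ltnW tn) (Ai t.+1 t :: u)).
  transitivity (B t.+1 s :: A t.+1 t :: Ai t.+1 t :: u).
    apply: (cong_step [::] (Ai t.+1 t :: u) (@abr_ab1 n s t t.+1 _ _ _ _)); lia.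
  apply: (cong_step [:: B t.+1 s] u (abr_inv1 _)); pok.
- clear IH. subst t. by rewrite psi_base.
Qed.

Lemma psi_phi w : ab_valid n w -> psi (phi w) ≈ w.
Proof.
elim: w => [_ //|c w IH]; rewrite {1}/ab_valid /= => /andP[Hc Hw].
rewrite /phi /= /psi map_cat. change (psi (img c) ++ psi (phi w) ≈ c :: w).
rewrite (IH Hw).
case: c Hc => t s /=; rewrite /pair_ok => /andP[/andP[s1 st] tn].
- exact: pp_A.
- exact: pp_Ai.
- exact: pp_B.
Qed.

Lemma psi_cong u v : SBeq n u v -> psi u ≈ psi v.
Proof.
elim=> [u0 v0 l r H|w|w1' w2' _ IH|w1' w2' w3 _ IH1 _ IH2].
- rewrite /psi !map_cat -!/(psi _). apply: cat_proper => //. apply: cat_proper => //. exact: psi_rel.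
- by [].
- by symmetry.
- by transitivity (psi w2').
Qed.
End AB.

Unset Implicit Arguments.

Theorem theorem4p1 (n : nat) : 2 <= n ->
  (* phi induces a well-defined and injective map on the presented monoids *)
  (forall w1 w2 : seq abletter, ab_valid n w1 -> ab_valid n w2 ->
     (ABeq n w1 w2 <-> SBeq n (phi w1) (phi w2))) /\
  (* and it is surjective onto SB_n *)
  (forall u : seq sbletter, sb_valid n u ->
     exists w : seq abletter, ab_valid n w /\ SBeq n (phi w) u).
Proof.
move=> n2; split.
- move=> w1 w2 V1 V2; split; first exact: phi_cong.
  move=> H.
  apply: cong_trans (cong_sym (psi_phi V1)) _.
  exact: cong_trans (psi_cong H) (psi_phi V2).
- move=> u V. exists (psi u). split; last by rewrite phi_psi.
  move: V; rewrite /sb_valid /ab_valid /psi.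
  elim: u => [//|a u IH] /= /andP[Ha Hu]. rewrite IH // andbT.
  by case: a Ha => i /=; rewrite /sb_idx /pair_ok /=; lia.
Qed.
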